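(* Let $p$ be an odd prime, $r\ge3$ with $p\nmid r$, $D=\mathrm{D}_{2r}$, and let $G=V\rtimes_\psi D$ with $V=\mathbb{Z}_p^d$ and $\psi:D\to\mathrm{GL}(V)$ irreducible and non-trivial. Let $A=\mathrm{Aut}(G)$, $N=\mathrm{N}_A(D)$, and define the homomorphism $\kappa:N\to\mathrm{Aut}(D)$ by $f\mapsto f|_D$. Then $\ker(\kappa)\cong\mathrm{End}_D(V)^\times$ and $\mathrm{im}(\kappa)=\mathrm{Aut}(D)_\psi$, where $\mathrm{Aut}(D)_\psi=\{\sigma\in\mathrm{Aut}(D):\psi\circ\sigma\cong\psi\}$.
   Context: $V\rtimes_\psi D$ is the semidirect product in which $D$ acts on $V=\mathbb{F}_p^d$ via $\psi$. $\mathrm{N}_A(D)=\{f\in A:f(D)=D\}$. $\mathrm{End}_D(V)$ is the ring of $\mathbb{F}_pD$-module endomorphisms of $V$ and $\mathrm{End}_D(V)^\times$ its unit group. *)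

(* Defs.v *)
From HB Require Import structures.
From mathcomp Require Import all_boot all_order all_algebra all_fingroup all_solvable.
From mathcomp Require Import mxrepresentation mxabelem.
Set Implicit Arguments. Unset Strict Implicit. Unset Printing Implicit Defensive.
Import GRing.Theory.
Local Open Scope group_scope.

(* D = 'D_(r.*2), the dihedral group of order 2r (extremal.v).
   V = 'rV['F_p]_(n.+1) (additive group), D acting on the right via
   v |-> v *m rho x, i.e. the group action 'MR rho of mxabelem.v. *)

Section Defs.
Variables (p r n : nat).
Variable rho : mx_representation 'F_p 'D_(r.*2) n.+1.

Definition sdG : finGroupType := sdprod_by (mx_repr_groupAction rho).

Definition Dhat : {set sdG} := sdpair2 (mx_repr_groupAction rho) @* 'D_(r.*2).

Definition NA : {set {perm sdG}} := [set f in Aut [set: sdG] | f @: Dhat == Dhat].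

(* f in N restricts to a in Aut(D), i.e. kappa f = a *)
Definition kappa_rel (f : {perm sdG}) (a : {perm gsort 'D_(r.*2)}) : bool :=
  [forall x in 'D_(r.*2),
     f (sdpair2 (mx_repr_groupAction rho) x) == sdpair2 (mx_repr_groupAction rho) (a x)].

Definition ker_kappa : {set {perm sdG}} := [set f in NA | kappa_rel f 1].

Definition im_kappa : {set {perm gsort 'D_(r.*2)}} :=
  [set a in Aut 'D_(r.*2) | [exists f in NA, kappa_rel f a]].

Definition EndD_units : {set {'GL_n.+1['F_p]}} :=
  [set g : {'GL_n.+1['F_p]} | centgmx rho (GLval g)].

(* Aut(D)_psi = { s in Aut(D) : psi o s ~ psi }; similarity of representations
   written out as in mx_rsim *)
Definition AutD_psi : {set {perm gsort 'D_(r.*2)}} :=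
  [set s in Aut 'D_(r.*2) |
     [exists B : 'M['F_p]_n.+1,
        row_free B && [forall x in 'D_(r.*2), (rho (s x) *m B == B *m rho x)%R]]].

End Defs.

(* Main.v *)
Require Import Defs.
From HB Require Import structures.
From mathcomp Require Import all_boot all_order all_algebra all_fingroup all_solvable.
From mathcomp Require Import mxrepresentation mxabelem.
Set Implicit Arguments. Unset Strict Implicit. Unset Printing Implicit Defensive.
Import GRing.Theory.
Local Open Scope group_scope.

Section S.
Variables (p r n : nat) (rho : mx_representation 'F_p 'D_(r.*2) n.+1).
Local Notation to := (mx_repr_groupAction rho).
Local Notation sdT := (sdG rho).
Local Notation DT := (gsort 'D_(r.*2)).
Local Notation s1 := (sdpair1 to).
Local Notation s2 := (sdpair2 to).

Lemma sdmulE (u v : sdT) : val (u * v) = (u.1 * v.1, (u.2 *m rho v.1 + v.2)%R).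
Proof. by rewrite /= mx_repr_actE ?inE. Qed.

Lemma s1E x : val (s1 x) = (1, x).
Proof. by rewrite /= val_insubd !inE. Qed.

Lemma s2E a : val (s2 a) = (a, 0%R).
Proof. by rewrite /= val_insubd !inE. Qed.

Lemma sdmul1 (u v : sdT) : (u * v).1 = u.1 * v.1.
Proof. by []. Qed.

Lemma sdmul2 (u v : sdT) : (u * v).2 = (u.2 *m rho v.1 + v.2)%R.
Proof. by rewrite /= mx_repr_actE ?inE. Qed.

Lemma s1_1 x : (s1 x).1 = 1.
Proof. by rewrite /= val_insubd !inE. Qed.
Lemma s1_2 x : (s1 x).2 = x.
Proof. by rewrite /= val_insubd !inE. Qed.
Lemma s2_1 x : (s2 x).1 = x.
Proof. by rewrite /= val_insubd !inE. Qed.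
Lemma s2_2 x : (s2 x).2 = 0%R.
Proof. by rewrite /= val_insubd !inE. Qed.

Lemma sd_eq (u v : sdT) : u.1 = v.1 -> u.2 = v.2 -> u = v.
Proof.
move=> e1 e2; apply: val_inj.
by case: u v e1 e2 => [[a x] ?] [[b y] ?] /= -> ->.
Qed.

Definition sdmap (T : 'M['F_p]_n.+1) (s : {perm DT}) (u : sdT) : sdT :=
  insubd u (s u.1, (u.2 *m T)%R).

Lemma sdmapE T s u : val (sdmap T s u) = (s u.1, (u.2 *m T)%R).
Proof. by rewrite val_insubd !inE. Qed.

Lemma sdmap_inj T s : T \in unitmx -> injective (sdmap T s).
Proof.
move=> uT u v /(congr1 val); rewrite !sdmapE => -[/perm_inj e1 e2].
apply: sd_eq => //.
by rewrite -(mulmxK uT u.2) e2 mulmxK.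
Qed.

Definition compat (T : 'M['F_p]_n.+1) (s : {perm DT}) :=
  forall a, (rho a *m T = T *m rho (s a))%R.

Lemma sdmapM T s : compat T s -> s \in Aut setT -> {morph sdmap T s : u v / u * v}.
Proof.
move=> cT /Aut_morphic/morphicP sM u v; apply: val_inj.
rewrite sdmulE !sdmapE sdmulE /= sM ?inE //.
by rewrite mulmxDl -!mulmxA cT.
Qed.

Lemma sdmap_s2 T s a : sdmap T s (s2 a) = s2 (s a).
Proof. by apply: val_inj; rewrite sdmapE !s2E /= mul0mx. Qed.

Definition sdperm T s (uT : T \in unitmx) := perm (@sdmap_inj T s uT).

Lemma sdpermE T s uT u : @sdperm T s uT u = sdmap T s u.
Proof. by rewrite permE. Qed.

Lemma sdmap_Aut T s (uT : T \in unitmx) : compat T s -> s \in Aut setT ->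
  sdperm s uT \in Aut setT.
Proof.
move=> cT sA; rewrite inE; apply/andP; split.
  by apply/subsetP => x; rewrite !inE.
by apply/morphicP => u v _ _; rewrite !sdpermE sdmapM.
Qed.

Lemma sdmap_NA T s (uT : T \in unitmx) : compat T s -> s \in Aut setT ->
  sdperm s uT \in NA rho.
Proof.
move=> cT sA; rewrite inE sdmap_Aut //=.
have sub: sdperm s uT @: Dhat rho \subset Dhat rho.
  apply/subsetP => _ /imsetP[_ /morphimP[a _ _ ->] ->].
  by rewrite sdpermE sdmap_s2 mem_morphim ?inE.
by rewrite eqEcard sub (card_imset _ (@perm_inj _ _)) leqnn.
Qed.

Lemma sdmap_kappa (T : 'M['F_p]_n.+1) s (uT : T \in unitmx) : kappa_rel (sdperm s uT) s.
Proof. by apply/forallP => x; apply/implyP => _; rewrite permE sdmap_s2. Qed.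


Lemma sdmap1 T s u : (sdmap T s u).1 = s u.1.
Proof. by rewrite /= val_insubd !inE. Qed.
Lemma sdmap2 T s u : (sdmap T s u).2 = (u.2 *m T)%R.
Proof. by rewrite /= val_insubd !inE. Qed.

Section Struct.
Hypotheses (pr : prime p) (pD : (p^').-nat #|[set: DT]|).

Lemma V_Hall : p.-Hall([set: sdT]) (s1 @* [set: 'rV['F_p]_n.+1]).
Proof.
have cV : #|s1 @* [set: 'rV['F_p]_n.+1]| = (p ^ (1 * n.+1))%N.
  by rewrite (card_injm (injm_sdpair1 to)) ?subxx // cardsT card_mx card_Fp.
have cG : #|[set: sdT]| = (#|s1 @* [set: 'rV['F_p]_n.+1]| * #|[set: DT]|)%N.
  by rewrite -(sdprod_card (sdprod_sdpair to)) (card_injm (injm_sdpair2 to)).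
rewrite /pHall subsetT /pgroup cV pnatX pnat_id //=.
by rewrite -divgS ?subsetT // cG mulKn // cV expn_gt0 prime_gt0.
Qed.

Lemma memV u : (u \in s1 @* [set: 'rV['F_p]_n.+1]) = p.-elt u.
Proof.
have [nV _ _ _ _] := sdprod_context (sdprod_sdpair to).
by rewrite (mem_normal_Hall V_Hall nV) ?inE.
Qed.

Lemma Aut_elt (f : {perm sdT}) u : f \in Aut [set: sdT] -> #[f u] = #[u].
Proof.
move=> Af; have := order_injm (injm_autm Af) (in_setT u).
by [].
Qed.

Lemma structure (f : {perm sdT}) a : f \in Aut [set: sdT] -> kappa_rel f a ->
  exists T : 'M['F_p]_n.+1, [/\ T \in unitmx, compat T a & forall u, f u = sdmap T a u].
Proof.
move=> Af /forallP kf.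
have fs2 b : f (s2 b) = s2 (a b) by have := kf b; rewrite inE /= => /eqP.
have fM : {morph f : u v / u * v}.
  by move=> u v; apply: (morphicP (Aut_morphic Af)); rewrite inE.
have fV x : f (s1 x) \in s1 @* [set: 'rV['F_p]_n.+1].
  by rewrite memV /p_elt (Aut_elt _ Af) -[p.-nat _]/(p.-elt _) -memV mem_morphim ?inE.
pose phi x := (f (s1 x)).2.
have fs1 x : f (s1 x) = s1 (phi x).
  have /morphimP[y _ _ ey] := fV x.
  by rewrite /phi ey s1_2.
have phiD x y : phi (x + y)%R = (phi x + phi y)%R.
  have e : s1 (x + y)%R = s1 x * s1 y.
    by apply: sd_eq; rewrite ?sdmul1 ?sdmul2 ?s1_1 ?s1_2 ?mulg1 // repr_mx1 mulmx1.
  have := congr1 f e; rewrite fM !fs1 => /(congr1 (fun u : sdT => u.2)).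
  by rewrite sdmul2 !s1_1 !s1_2 repr_mx1 mulmx1.
have phi0 : phi 0%R = 0%R.
  apply: (@addrI _ (phi 0%R)); by rewrite -phiD !addr0.
have phiMn k x : phi (x *+ k)%R = (phi x *+ k)%R.
  by elim: k => [|k IH]; rewrite ?mulr0n ?phi0 // !mulrS phiD IH.
have phiZ c x : phi (c *: x)%R = (c *: phi x)%R.
  have -> : c = ((c : nat)%:R)%R.
    apply: val_inj; rewrite /= val_Fp_nat // modn_small //.
    by apply: leq_trans (ltn_ord c) _; rewrite Fp_cast.
  by rewrite !scaler_nat phiMn.
pose T := (\matrix_(i < n.+1) phi (delta_mx 0 i))%R.
have phiT x : phi x = (x *m T)%R.
  rewrite mulmx_sum_row {1}[x]row_sum_delta (big_morph phi phiD phi0).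
  by apply: eq_bigr => i _; rewrite phiZ rowK.
exists T; split.
- have inj1 (x : 'rV['F_p]_n.+1) : (x *m T)%R = 0%R -> x = 0%R.
    rewrite -phiT => e.
    have : f (s1 x) = f (s1 0%R) by rewrite !fs1 e phi0.
    by move/perm_inj => /(congr1 (fun u : sdT => u.2)); rewrite !s1_2.
  rewrite -row_free_unit -kermx_eq0; apply/eqP/row_matrixP => i.
  by rewrite row0; apply: inj1; rewrite -row_mul mulmx_ker row0.
- move=> b.
  have key (x : 'rV['F_p]_n.+1) : phi (x *m rho b)%R = (phi x *m rho (a b))%R.
    have e : s2 b * s1 (x *m rho b)%R = s1 x * s2 b.
      apply: sd_eq; rewrite ?sdmul1 ?sdmul2 ?s1_1 ?s1_2 ?s2_1 ?s2_2 ?mulg1 ?mul1g //.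
      by rewrite mul0mx add0r addr0.
    have := congr1 f e; rewrite !fM fs2 !fs1 => /(congr1 (fun u : sdT => u.2)).
    by rewrite !sdmul2 !s1_1 !s1_2 !s2_1 !s2_2 mul0mx add0r addr0.
  apply/row_matrixP => i.
  by rewrite !rowE !mulmxA -phiT key phiT.
- move=> u.
  have -> : f u = f (s2 u.1 * s1 u.2) by rewrite -sdpairE.
  rewrite fM fs2 fs1; apply: sd_eq.
    by rewrite sdmul1 sdmap1 s2_1 s1_1 mulg1.
  by rewrite sdmul2 sdmap2 s2_2 s1_1 s1_2 mul0mx add0r phiT.
Qed.

End Struct.

Definition Mfun (g : {'GL_n.+1['F_p]}) : {perm sdT} := @sdperm (GLval g) 1 (GL_unit g).

Lemma MfunM : {in [set: {'GL_n.+1['F_p]}] &, {morph Mfun : g h / g * h}}.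
Proof.
move=> g h _ _; apply/permP => u; rewrite permM !sdpermE.
apply: sd_eq; rewrite ?sdmap1 ?sdmap2 ?perm1 //.
by rewrite GL_MxE mulmxA.
Qed.

Canonical Mmorph := Morphism MfunM.

Lemma Minj : 'injm Mmorph.
Proof.
apply/injmP => g h _ _ /= e; apply: val_inj; apply/row_matrixP => i.
have := congr1 (fun f : {perm sdT} => (f (s1 (delta_mx 0 i)%R)).2) e.
by rewrite /= !sdpermE !sdmap2 !s1_2 -!rowE.
Qed.

Lemma EndD_gs : group_set (EndD_units rho).
Proof.
apply/group_setP; split.
  by rewrite inE; apply/centgmxP => x _; rewrite GL_1E mul1mx mulmx1.
move=> g h; rewrite !inE => /centgmxP cg /centgmxP ch.
by apply/centgmxP => x Dx; rewrite GL_MxE -mulmxA ch // !mulmxA cg.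
Qed.

Lemma Mim (pr : prime p) (pD : (p^').-nat #|[set: DT]|) :
  Mmorph @* EndD_units rho = ker_kappa rho.
Proof.
rewrite morphimEsub ?subsetT //; apply/setP => f; apply/imsetP/idP.
  case=> g; rewrite inE => /centgmxP cg ->.
  have cT : compat (GLval g) 1 by move=> a; rewrite perm1 cg ?inE.
  by rewrite inE sdmap_NA ?group1 // sdmap_kappa.
rewrite inE => /andP[fN k1].
have fA : f \in Aut [set: sdT] by move: fN; rewrite inE => /andP[].
have [T [uT cT fE]] := structure pr pD fA k1.
exists (FinRing.Unit (uT : T \is a GRing.unit)).
  by rewrite inE; apply/centgmxP => x _ /=; rewrite cT perm1.
by apply/permP => u; rewrite fE /Mfun sdpermE.
Qed.

End S.

Local Close Scope group_scope.

Theorem lemma5p3 (p r n : nat) (rho : mx_representation 'F_p 'D_(r.*2) n.+1) :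
  prime p -> odd p -> 3 <= r -> ~~ (p %| r) ->
  mx_irreducible rho ->
  [exists x in 'D_(r.*2), (rho x != 1%:M)%R] ->
  (ker_kappa rho \isog EndD_units rho) /\ im_kappa rho = AutD_psi rho.
Proof.
move=> pr oddp r3 ndr _ _.
have pD : (p^').-nat #|[set: gsort 'D_(r.*2)]|.
  rewrite card_dihedral; last by apply: leq_trans r3.
  rewrite p'natE // -mul2n Euclid_dvdM // (negbTE ndr) orbF dvdn_prime2 //.
  by apply/eqP => p2; rewrite p2 in oddp.
split.
  rewrite -(Mim rho pr pD).
  apply: (@isog_symr _ _ (Group (EndD_gs rho)) (Mmorph rho @* Group (EndD_gs rho))%G).
  exact: sub_isog (subsetT _) (Minj rho).
apply/setP => a; rewrite !inE; apply: andb_id2l => Aa.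
apply/existsP/existsP.
  case=> f /andP[fN ka].
  have fA : f \in Aut [set: sdG rho] by move: fN; rewrite inE => /andP[].
  have [T [uT cT fE]] := structure pr pD fA ka.
  exists (invmx T); rewrite row_free_unit unitmx_inv uT /=.
  apply/forallP => x; apply/implyP => _; apply/eqP.
  by rewrite -(mulmxK uT (rho x)) cT !mulmxA mulVmx // mul1mx.
case=> B /andP[fB /forallP cB].
have uB : B \in unitmx by rewrite -row_free_unit.
have uT : invmx B \in unitmx by rewrite unitmx_inv.
have cT : compat rho (invmx B) a.
  move=> x; have := cB x; rewrite inE /= => /eqP e.
  by rewrite -[rho x](mulKmx uB) -e -mulmxA mulmxK.
exists (sdperm rho a uT).
rewrite sdmap_NA //=; [exact: sdmap_kappa | by rewrite inE].
Qed.
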